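(* Let $S \in \mathbb{Z}^{m\times m}$ be a nonsingular Smith form, $T \in \mathbb{Z}^{m\times m}$ a nonsingular matrix in Hermite form, $A \in \mathbb{Z}^{a\times m}$ and $F\in\mathbb{Z}^{f\times m}$ (with $a,f\ge 0$), such that every row of $S$ and of $A$ lies in $\mathcal{L}(T)$. Consider, with column blocks of sizes $f,m,a,m$, $$M = \begin{bmatrix} I_f & F & 0 & 0 \\ 0 & T & 0 & I_m \\ 0 & A & I_a & 0 \\ 0 & S & 0 & 0\end{bmatrix}.$$ Then: (1) The Hermite form of $M$ has the shape $\begin{bmatrix} I_f & G & 0 & Q \\ 0 & T & 0 & X \\ 0 & 0 & I_a & C \\ 0 & 0 & 0 & K\end{bmatrix}$ for some integer blocks $G\in\mathbb{Z}^{f\times m}$, $Q\in\mathbb{Z}^{f\times m}$, $X\in\mathbb{Z}^{m\times m}$, $C \in\mathbb{Z}^{a\times m}$, $K\in\mathbb{Z}^{m\times m}$. (2) $\begin{bmatrix} I_a & C\\ 0 & K\end{bmatrix}$ is the Hermite form of the integer matrix $\begin{bmatrix} I_a & -AT^{-1} \\ 0 & -ST^{-1}\end{bmatrix}$. (3) There is a unimodular matrix of the form $\bar U = \begin{bmatrix} I_f & Q & 0 & Y_2 \\ 0 & I_m & 0 & 0 \\ 0 & C & I_a & Y_3 \\ 0 & K & 0 & Y_4\end{bmatrix}$ (for some integer blocks $Y_2,Y_3,Y_4$, with $G,Q,C,K$ as in (1)) such that $$\bar U M = \begin{bmatrix} I_f & G & 0 & Q \\ 0 & T & 0 & I_m \\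 0 & 0 & I_a & C \\ 0 & 0 & 0 & K\end{bmatrix}.$$
   Context: For an integer matrix $A$, $\mathcal{L}(A)$ denotes the lattice of all $\mathbb{Z}$-linear combinations of the rows of $A$. A nonsingular square integer matrix is in Hermite form if it is upper triangular with positive diagonal entries $h_j$ and each entry above the diagonal in column $j$ lies in $[0,h_j)$; every nonsingular integer matrix $B$ has a unique Hermite form $WB$ with $W$ unimodular. A Smith form is a diagonal matrix $\mathrm{diag}(s_1,\dots,s_m)$ with nonnegative integer entries and $s_i \mid s_{i+1}$; it is nonsingular if all $s_i>0$. *)

(* Defs.v *)
From HB Require Import structures.
From mathcomp Require Import all_boot all_order all_algebra.
Set Implicit Arguments. Unset Strict Implicit. Unset Printing Implicit Defensive.
Import Order.TTheory GRing.Theory Num.Theory.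
Local Open Scope ring_scope.

Definition row4 (R : Type) (r p1 p2 p3 p4 : nat)
  (B1 : 'M[R]_(r, p1)) (B2 : 'M[R]_(r, p2)) (B3 : 'M[R]_(r, p3)) (B4 : 'M[R]_(r, p4))
  : 'M[R]_(r, p1 + p2 + p3 + p4) := row_mx (row_mx (row_mx B1 B2) B3) B4.

Definition col4 (R : Type) (c p1 p2 p3 p4 : nat)
  (R1 : 'M[R]_(p1, c)) (R2 : 'M[R]_(p2, c)) (R3 : 'M[R]_(p3, c)) (R4 : 'M[R]_(p4, c))
  : 'M[R]_(p1 + p2 + p3 + p4, c) := col_mx (col_mx (col_mx R1 R2) R3) R4.

Definition in_lattice (k m : nat) (B : 'M[int]_(k, m)) (v : 'rV[int]_m) : Prop :=
  exists x : 'rV[int]_k, v = x *m B.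

Definition is_hermite (n : nat) (H : 'M[int]_n) : Prop :=
  [/\ forall i j : 'I_n, (j < i)%N -> H i j = 0,
      forall j : 'I_n, 0 < H j j &
      forall i j : 'I_n, (i < j)%N -> 0 <= H i j < H j j].

Definition unimodular (n : nat) (W : 'M[int]_n) : Prop := W \in unitmx.

Definition hermite_form_of (n : nat) (B H : 'M[int]_n) : Prop :=
  is_hermite H /\ exists W : 'M[int]_n, unimodular W /\ H = W *m B.

Definition is_smith (n : nat) (S : 'M[int]_n) : Prop :=
  [/\ forall i j : 'I_n, i != j -> S i j = 0,
      forall i : 'I_n, 0 <= S i i &
      forall i j : 'I_n, (i.+1 = j)%N -> (S i i %| S j j)%Z].

Definition is_nonsingular_smith (n : nat) (S : 'M[int]_n) : Prop :=
  is_smith S /\ forall i : 'I_n, 0 < S i i.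

Definition ratmx (p q : nat) (B : 'M[int]_(p, q)) : 'M[rat]_(p, q) :=
  map_mx (fun x : int => x%:~R) B.

(* Main.v *)
Require Import Defs.
From HB Require Import structures.
From mathcomp Require Import all_boot all_order all_algebra.
Import Order.TTheory GRing.Theory Num.Theory.
Local Open Scope ring_scope.

Set Implicit Arguments. Unset Strict Implicit.

Lemma hermite_block p q (H1 : 'M[int]_p) (R : 'M[int]_(p, q)) (H2 : 'M[int]_q) :
  is_hermite H1 -> is_hermite H2 -> (forall i j, 0 <= R i j < H2 j j) ->
  is_hermite (block_mx H1 R 0 H2).
Proof.
move=> [l1 d1 u1] [l2 d2 u2] hR; split.
- move=> i j; case: (split_ordP i) => i' ->; case: (split_ordP j) => j' ->.
  + by rewrite block_mxEul /=; apply: l1.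
  + by rewrite /= => h; have := ltn_ord i'; rewrite ltnNge (leq_trans _ (ltnW h)) // leq_addr.
  + by rewrite block_mxEdl mxE.
  + by rewrite block_mxEdr /= ltn_add2l; apply: l2.
- by move=> j; case: (split_ordP j) => j' ->; rewrite ?block_mxEul ?block_mxEdr.
- move=> i j; case: (split_ordP i) => i' ->; case: (split_ordP j) => j' ->.
  + by rewrite !block_mxEul /=; apply: u1.
  + by rewrite block_mxEur block_mxEdr.
  + by rewrite /= => h; have := ltn_ord j'; rewrite ltnNge (leq_trans _ (ltnW h)) // leq_addr.
  + by rewrite !block_mxEdr /= ltn_add2l; apply: u2.
Qed.

Lemma hermite1 n : is_hermite (1%:M : 'M[int]_n).
Proof.
split=> [i j h|j|i j h]; rewrite !mxE ?eqxx //.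
- by case: eqP => [e|]; [rewrite e ltnn in h|].
- by case: eqP => [e|]; [rewrite e ltnn in h|].
Qed.

Lemma reduce_mx n (H : 'M[int]_n) :
  (forall i j : 'I_n, (j < i)%N -> H i j = 0) -> (forall j, 0 < H j j) ->
  forall k (V : 'M[int]_(k, n)), exists Z : 'M[int]_(k, n),
    forall i j, 0 <= (V - Z *m H) i j < H j j.
Proof.
elim: n H => [|n IH] H hl hd k V; first by exists 0 => i [].
change n.+1 with (1 + n)%N in *.
set ul := ulsubmx (H : 'M_(1 + n)); set s := ursubmx (H : 'M_(1 + n)).
set H' := drsubmx (H : 'M_(1 + n)).
have hdl : dlsubmx (H : 'M_(1 + n)) = 0.
  by apply/matrixP => i j; rewrite !mxE hl // ord1.
have hl' : forall i j : 'I_n, (j < i)%N -> H' i j = 0.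
  by move=> i j h; rewrite /H' !mxE hl.
have hd' : forall j, 0 < H' j j by move=> j; rewrite /H' !mxE.
have hu : 0 < ul ord0 ord0 by rewrite /ul !mxE.
set v0 := lsubmx (V : 'M_(k, 1 + n)); set V' := rsubmx (V : 'M_(k, 1 + n)).
pose q : 'M[int]_(k, 1) := \matrix_(i, j) ((v0 i j) %/ (ul ord0 ord0))%Z.
have [Z' hZ'] := IH H' hl' hd' k (V' - q *m s).
exists (row_mx q Z') => i j.
have eH : H = block_mx ul s 0 H' by rewrite -hdl submxK.
have eV : V = row_mx v0 V' by rewrite hsubmxK.
rewrite eH eV mul_row_block mulmx0 addr0 opp_row_mx add_row_mx.
case: (split_ordP j) => j' ->.
  rewrite row_mxEl block_mxEul !mxE big_ord1 !mxE ord1.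
  have hu0 : ul ord0 ord0 != 0 by rewrite gt_eqF.
  have e : forall x d : int, x - (x %/ d)%Z * d = (x %% d)%Z.
    by move=> x d; rewrite {1}(divz_eq x d) addrC addKr.
  have hu' := hu; rewrite /ul !mxE in hu' hu0.
  by rewrite e modz_ge0 //= ltz_pmod.
rewrite row_mxEr block_mxEdr.
have := hZ' i j'; rewrite !mxE.
by rewrite opprD addrA.
Qed.

Lemma col_reduce n (v : 'M[int]_(1 + n, 1)) :
  exists L : 'M[int]_(1 + n), L \in unitmx /\ exists c : 'M[int]_1, L *m v = col_mx c 0.
Proof.
have [L uL [R uR [d _ ev]]] := int_Smith_normal_form v.
exists (invmx L); split; first by rewrite unitmx_inv.
set D := \matrix_(i, j) _ in ev.
exists (usubmx (D *m R)).
rewrite ev -!mulmxA mulKmx //.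
have hd : dsubmx (D *m R) = 0.
  by apply/matrixP => i j; rewrite !mxE big_ord1 !mxE /= mulr0n mul0r.
by rewrite -{1}[D *m R]vsubmxK hd.
Qed.

Lemma hermite11 (c : 'M[int]_1) : 0 < c 0 0 -> is_hermite c.
Proof. by move=> h; split => [i j|j|i j]; rewrite !ord1. Qed.

Lemma hermite_exists n (B : 'M[int]_n) : \det B != 0 ->
  exists W : 'M[int]_n, W \in unitmx /\ is_hermite (W *m B).
Proof.
elim: n B => [|n IH] B hB.
  by exists 1%:M; split; [exact: unitmx1 | split => -[]].
move: B hB; change n.+1 with (1 + n)%N => B hB.
have [L [uL [c hc]]] := col_reduce (lsubmx B).
set B1 := L *m B.
have hl : lsubmx B1 = col_mx c 0 by rewrite -mulmx_lsub hc.
have e1 : ulsubmx B1 = c.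
  by apply/matrixP=> i j; rewrite -(col_mxEu c (0:'M_(n,1)) i j) -hl !mxE.
have e2 : dlsubmx B1 = 0.
  by apply/matrixP=> i j; rewrite -(col_mxEd c (0:'M_(n,1)) i j) -hl !mxE.
set r := ursubmx B1; set B' := drsubmx B1.
have eB1 : B1 = block_mx c r 0 B' by rewrite -e1 -e2 submxK.
have hdB1 : \det B1 != 0.
  by rewrite det_mulmx mulf_neq0 //; apply: contraTneq uL => h; rewrite unitmxE h unitr0.
move: hdB1; rewrite eB1 det_ublock det_mx11 mulf_eq0 negb_or => /andP[hc0 hB'].
have [W' [uW' hH']] := IH B' hB'.
set g := c 0 0 in hc0.
pose sg : int := if 0 < g then 1 else -1.
have hsg : 0 < sg * g.
  rewrite /sg; case: ifP => h; first by rewrite mul1r.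
  by rewrite mulN1r oppr_gt0 lt_neqAle hc0 /= leNgt h.
have usg : sg \is a GRing.unit by rewrite /sg; case: ifP => _; rewrite ?unitr1 ?unitrN1.
pose D := block_mx (sg%:M : 'M_1) 0 0 W'.
have hDB : D *m B1 = block_mx (sg%:M *m c) (sg%:M *m r) 0 (W' *m B').
  by rewrite eB1 mulmx_block !mulmx0 !mul0mx !addr0 add0r.
have [hl' hd' _] := hH'.
have [Z hZ] := reduce_mx hl' hd' (sg%:M *m r).
pose E := block_mx (1%:M : 'M_1) (- Z) 0 (1%:M : 'M_n).
have hE : E *m (D *m B1) = block_mx (sg%:M *m c) (sg%:M *m r - Z *m (W' *m B')) 0 (W' *m B').
  by rewrite hDB mulmx_block !mulmx0 !mul0mx !mul1mx !addr0 add0r mulNmx.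
exists (E *m D *m L); split.
  rewrite !unitmx_mul uL !unitmxE /E /D !det_ublock !det1 !mulr1 det_scalar1.
  by rewrite unitrM usg -unitmxE uW'.
rewrite -!mulmxA -/B1 hE.
apply: hermite_block => //.
apply: hermite11.
by rewrite !mxE big_ord1 !mxE /= mulr1n.
Qed.

Section B4.
Variables (p1 p2 p3 p4 q1 q2 q3 q4 : nat).

Lemma mul_col4 r (R1 : 'M[int]_(p1, r)) (R2 : 'M[int]_(p2, r)) (R3 : 'M[int]_(p3, r))
  (R4 : 'M[int]_(p4, r)) s (B : 'M[int]_(r, s)) :
  col4 R1 R2 R3 R4 *m B = col4 (R1 *m B) (R2 *m B) (R3 *m B) (R4 *m B).
Proof. by rewrite /col4 !mul_col_mx. Qed.

Lemma mul_row4_col4 k (A1 : 'M[int]_(k, p1)) (A2 : 'M[int]_(k, p2)) (A3 : 'M[int]_(k, p3))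
  (A4 : 'M[int]_(k, p4))
  (B11 : 'M[int]_(p1, q1)) (B12 : 'M[int]_(p1, q2)) (B13 : 'M[int]_(p1, q3)) (B14 : 'M[int]_(p1, q4))
  (B21 : 'M[int]_(p2, q1)) (B22 : 'M[int]_(p2, q2)) (B23 : 'M[int]_(p2, q3)) (B24 : 'M[int]_(p2, q4))
  (B31 : 'M[int]_(p3, q1)) (B32 : 'M[int]_(p3, q2)) (B33 : 'M[int]_(p3, q3)) (B34 : 'M[int]_(p3, q4))
  (B41 : 'M[int]_(p4, q1)) (B42 : 'M[int]_(p4, q2)) (B43 : 'M[int]_(p4, q3)) (B44 : 'M[int]_(p4, q4)) :
  row4 A1 A2 A3 A4 *m col4 (row4 B11 B12 B13 B14) (row4 B21 B22 B23 B24)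
                           (row4 B31 B32 B33 B34) (row4 B41 B42 B43 B44)
  = row4 (A1 *m B11 + A2 *m B21 + A3 *m B31 + A4 *m B41)
         (A1 *m B12 + A2 *m B22 + A3 *m B32 + A4 *m B42)
         (A1 *m B13 + A2 *m B23 + A3 *m B33 + A4 *m B43)
         (A1 *m B14 + A2 *m B24 + A3 *m B34 + A4 *m B44).
Proof. by rewrite /row4 /col4 !mul_row_col !mul_mx_row !add_row_mx. Qed.

Lemma col4_block
  (B11 : 'M[int]_(p1, q1)) (B12 : 'M[int]_(p1, q2)) (B13 : 'M[int]_(p1, q3)) (B14 : 'M[int]_(p1, q4))
  (B21 : 'M[int]_(p2, q1)) (B22 : 'M[int]_(p2, q2)) (B23 : 'M[int]_(p2, q3)) (B24 : 'M[int]_(p2, q4))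
  (B31 : 'M[int]_(p3, q1)) (B32 : 'M[int]_(p3, q2)) (B33 : 'M[int]_(p3, q3)) (B34 : 'M[int]_(p3, q4))
  (B41 : 'M[int]_(p4, q1)) (B42 : 'M[int]_(p4, q2)) (B43 : 'M[int]_(p4, q3)) (B44 : 'M[int]_(p4, q4)) :
  col4 (row4 B11 B12 B13 B14) (row4 B21 B22 B23 B24)
       (row4 B31 B32 B33 B34) (row4 B41 B42 B43 B44)
  = block_mx (block_mx (block_mx B11 B12 B21 B22) (col_mx B13 B23) (row_mx B31 B32) B33)
             (col_mx (col_mx B14 B24) B34) (row_mx (row_mx B41 B42) B43) B44.
Proof.
rewrite /col4 /row4.
rewrite -[col_mx (row_mx (row_mx (row_mx B11 B12) B13) B14) _]/(block_mx _ _ _ _) block_mxEh.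
rewrite -[col_mx (row_mx (row_mx B11 B12) B13) _]/(block_mx _ _ _ _).
rewrite block_mxEh.
by rewrite -[col_mx (row_mx (row_mx _ _) (col_mx B14 B24)) _]/(block_mx _ _ _ _) block_mxEh.
Qed.

End B4.

Lemma range_col p1 p2 q (A1 : 'M[int]_(p1, q)) (A2 : 'M[int]_(p2, q)) (P : int -> 'I_q -> Prop) :
  (forall i j, P (A1 i j) j) -> (forall i j, P (A2 i j) j) -> forall i j, P (col_mx A1 A2 i j) j.
Proof.
by move=> h1 h2 i j; case: (split_ordP i) => i' ->; rewrite ?col_mxEu ?col_mxEd.
Qed.
Unset Implicit Arguments. Set Strict Implicit.

Lemma lattice_mx {m k} {T : 'M[int]_m} {B : 'M[int]_(k, m)} :
  (forall i, in_lattice T (row i B)) -> exists P : 'M[int]_(k, m), B = P *m T.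
Proof.
move=> h.
have h' : forall i, exists x : 'rV[int]_m, row i B = x *m T by move=> i; exact: h i.
have [x hx] := fin_all_exists h'.
exists (\matrix_(i, j) x i ord0 j); apply/row_matrixP => i.
rewrite row_mul hx; congr (_ *m T); apply/rowP => j; rewrite !mxE.
by rewrite [ord0](ord1).
Qed.

Lemma detN_neq0 {n} {P : 'M[int]_n} : \det P != 0 -> \det (- P) != 0.
Proof.
move=> h; rewrite -scaleN1r -mul_scalar_mx det_mulmx det_scalar mulf_neq0 //.
by rewrite signr_eq0.
Qed.

Theorem mainTheorem13 (m a f : nat)
  (S T : 'M[int]_m) (A : 'M[int]_(a, m)) (F : 'M[int]_(f, m)) :
  is_nonsingular_smith S ->
  is_hermite T ->
  (forall i : 'I_m, in_lattice T (row i S)) ->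
  (forall i : 'I_a, in_lattice T (row i A)) ->
  let M : 'M[int]_(f + m + a + m) :=
    col4 (row4 (1%:M : 'M_f) F (0 : 'M_(f, a)) (0 : 'M_(f, m)))
         (row4 (0 : 'M_(m, f)) T (0 : 'M_(m, a)) (1%:M : 'M_m))
         (row4 (0 : 'M_(a, f)) A (1%:M : 'M_a) (0 : 'M_(a, m)))
         (row4 (0 : 'M_(m, f)) S (0 : 'M_(m, a)) (0 : 'M_m)) in
  exists (G Q : 'M[int]_(f, m)) (X : 'M[int]_m) (C : 'M[int]_(a, m)) (K : 'M[int]_m)
         (Y2 : 'M[int]_(f, m)) (Y3 : 'M[int]_(a, m)) (Y4 : 'M[int]_m),
    [/\
     (* (1) *)
     hermite_form_of M
       (col4 (row4 (1%:M : 'M_f) G (0 : 'M_(f, a)) Q)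
             (row4 (0 : 'M_(m, f)) T (0 : 'M_(m, a)) X)
             (row4 (0 : 'M_(a, f)) (0 : 'M_(a, m)) (1%:M : 'M_a) C)
             (row4 (0 : 'M_(m, f)) (0 : 'M_m) (0 : 'M_(m, a)) K)),
     (* (2) *)
     exists N : 'M[int]_(a + m),
       ratmx N = block_mx (1%:M : 'M[rat]_a) (- (ratmx A *m invmx (ratmx T)))
                          (0 : 'M[rat]_(m, a)) (- (ratmx S *m invmx (ratmx T)))
       /\ hermite_form_of N (block_mx (1%:M : 'M_a) C (0 : 'M_(m, a)) K) &
     (* (3) *)
     let Ubar : 'M[int]_(f + m + a + m) :=
       col4 (row4 (1%:M : 'M_f) Q (0 : 'M_(f, a)) Y2)
            (row4 (0 : 'M_(m, f)) (1%:M : 'M_m) (0 : 'M_(m, a)) (0 : 'M_m))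
            (row4 (0 : 'M_(a, f)) C (1%:M : 'M_a) Y3)
            (row4 (0 : 'M_(m, f)) K (0 : 'M_(m, a)) Y4) in
     unimodular Ubar /\
     Ubar *m M =
       col4 (row4 (1%:M : 'M_f) G (0 : 'M_(f, a)) Q)
            (row4 (0 : 'M_(m, f)) T (0 : 'M_(m, a)) (1%:M : 'M_m))
            (row4 (0 : 'M_(a, f)) (0 : 'M_(a, m)) (1%:M : 'M_a) C)
            (row4 (0 : 'M_(m, f)) (0 : 'M_m) (0 : 'M_(m, a)) K)].
Proof.
move=> [[hSo hSd _] hSpos] hT hSL hAL M.
have [PS hPS] := lattice_mx hSL.
have [PA hPA] := lattice_mx hAL.
have hdS : \det S != 0.
  rewrite det_trig; last by apply/is_trig_mxP => i j h; apply: hSo; rewrite neq_ltn h.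
  by rewrite gt_eqF // prodr_gt0.
have [hdPS hdT] : \det PS != 0 /\ \det T != 0.
  by move: hdS; rewrite hPS det_mulmx mulf_eq0 negb_or => /andP.
have [W4 [uW4 hK]] := hermite_exists (detN_neq0 hdPS).
set K := W4 *m - PS in hK.
have [lT dT uT] := hT.
have [lK dK uK] := hK.
have [Z0 hZ0] := reduce_mx lT dT F.
have [Z3 hZ3] := reduce_mx lK dK (- PA).
have [Z1 hZ1] := reduce_mx lK dK (- Z0).
have [Z2 hZ2] := reduce_mx lK dK (1%:M : 'M_m).
have hKPS : K + W4 *m PS = 0 by rewrite /K mulmxN addNr.
exists (F - Z0 *m T), (- Z0 - Z1 *m K), (1%:M - Z2 *m K), (- PA - Z3 *m K), K,
  (- (Z1 *m W4)), (- (Z3 *m W4)), W4.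
set G := F - Z0 *m T; set Q := - Z0 - Z1 *m K; set X := 1%:M - Z2 *m K.
set C := - PA - Z3 *m K; set Y2 := - (Z1 *m W4); set Y3 := - (Z3 *m W4).
set Ubar := col4 (row4 (1%:M : 'M_f) Q (0 : 'M_(f, a)) Y2)
            (row4 (0 : 'M_(m, f)) (1%:M : 'M_m) (0 : 'M_(m, a)) (0 : 'M_m))
            (row4 (0 : 'M_(a, f)) C (1%:M : 'M_a) Y3)
            (row4 (0 : 'M_(m, f)) K (0 : 'M_(m, a)) W4).
have hUM : Ubar *m M =
       col4 (row4 (1%:M : 'M_f) G (0 : 'M_(f, a)) Q)
            (row4 (0 : 'M_(m, f)) T (0 : 'M_(m, a)) (1%:M : 'M_m))
            (row4 (0 : 'M_(a, f)) (0 : 'M_(a, m)) (1%:M : 'M_a) C)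
            (row4 (0 : 'M_(m, f)) (0 : 'M_m) (0 : 'M_(m, a)) K).
  rewrite /Ubar /M mul_col4 !mul_row4_col4 !mul1mx !mulmx1 !mul0mx !mulmx0 !addr0 !add0r.
  have hKT : K *m T = - (W4 *m S).
    by apply/eqP; rewrite -addr_eq0 hPS mulmxA -mulmxDl hKPS mul0mx.
  have e1 : F + Q *m T + Y2 *m S = G.
    rewrite /Q /Y2 mulmxDl !mulNmx -mulmxA hKT mulmxN opprK mulmxA.
    by rewrite addrA addrK.
  have e3 : C *m T + A + Y3 *m S = 0.
    rewrite /C /Y3 mulmxDl !mulNmx -mulmxA hKT mulmxN opprK mulmxA -hPA.
    by rewrite (addrAC (- A)) addNr add0r subrr.
  have e4 : K *m T + W4 *m S = 0 by rewrite hKT addNr.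
  by rewrite e1 e3 e4.
have uUbar : unimodular Ubar.
  pose Lo := col4 (row4 (1%:M : 'M_f) (0 : 'M_(f, m)) (0 : 'M_(f, a)) (0 : 'M_(f, m)))
            (row4 (0 : 'M_(m, f)) (1%:M : 'M_m) (0 : 'M_(m, a)) (0 : 'M_m))
            (row4 (0 : 'M_(a, f)) C (1%:M : 'M_a) (0 : 'M_(a, m)))
            (row4 (0 : 'M_(m, f)) K (0 : 'M_(m, a)) W4).
  pose Up := col4 (row4 (1%:M : 'M_f) Q (0 : 'M_(f, a)) Y2)
            (row4 (0 : 'M_(m, f)) (1%:M : 'M_m) (0 : 'M_(m, a)) (0 : 'M_m))
            (row4 (0 : 'M_(a, f)) (0 : 'M_(a, m)) (1%:M : 'M_a) Y3)
            (row4 (0 : 'M_(m, f)) (0 : 'M_m) (0 : 'M_(m, a)) (1%:M : 'M_m)).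
  have -> : Ubar = Lo *m Up.
    rewrite /Lo /Up mul_col4 !mul_row4_col4 !mul1mx !mulmx1 !mul0mx !mulmx0 !addr0 !add0r.
    by [].
  rewrite /unimodular unitmx_mul !unitmxE /Lo /Up !col4_block !col_mx0 !det_lblock.
  rewrite !row_mx0 !det_ublock !det1 !mul1r -unitmxE uW4.
  exact: unitr1.
split; last by split.
- pose V := col4 (row4 (1%:M : 'M_f) (0 : 'M_(f, m)) (0 : 'M_(f, a)) (0 : 'M_(f, m)))
            (row4 (0 : 'M_(m, f)) (1%:M : 'M_m) (0 : 'M_(m, a)) (- Z2))
            (row4 (0 : 'M_(a, f)) (0 : 'M_(a, m)) (1%:M : 'M_a) (0 : 'M_(a, m)))
            (row4 (0 : 'M_(m, f)) (0 : 'M_m) (0 : 'M_(m, a)) (1%:M : 'M_m)).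
  split; last first.
    exists (V *m Ubar); split.
      rewrite /unimodular unitmx_mul uUbar andbT unitmxE /V col4_block !row_mx0.
      by rewrite !det_ublock !det1 !mul1r; exact: unitr1.
    rewrite -mulmxA hUM /V mul_col4 !mul_row4_col4 !mul1mx !mulmx1 !mul0mx !mulmx0.
    by rewrite !addr0 !add0r mulNmx.
  rewrite col4_block !row_mx0 !col_mx0.
  apply: hermite_block => //; last first.
    apply: (range_col (P := fun x j => 0 <= x < K j j)); last exact: hZ3.
    by apply: (range_col (P := fun x j => 0 <= x < K j j)); [exact: hZ1 | exact: hZ2].
  apply: hermite_block => //; last by move=> i j; rewrite !mxE eqxx.
    apply: hermite_block => //; first exact: hermite1.
    exact: hermite1.
- exists (block_mx (1%:M : 'M_a) (- PA) 0 (- PS)); split.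
    have uTr : ratmx T \in unitmx.
      by rewrite unitmxE /ratmx det_map_mx unitfE intr_eq0.
    move: uTr; rewrite /ratmx => uTr.
    rewrite map_block_mx map_mx1 !map_mxN map_mx0 hPA hPS !map_mxM -!mulmxA.
    by rewrite mulmxV // !mulmx1.
  split; first by apply: hermite_block => //; exact: hermite1.
  exists (block_mx (1%:M : 'M_a) Y3 0 W4); split.
    by rewrite /unimodular unitmxE det_ublock det1 mul1r -unitmxE.
  rewrite mulmx_block !mulmx0 !mul0mx !mul1mx !addr0 !add0r.
  by rewrite /C /Y3 /K mulNmx mulmxA.
Qed.
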